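(* Let $f,g$ satisfy the standing assumptions below, fix $\hat\beta>0$, and suppose $\beta\ge\frac{2Q_gM_f}{\mu^3}$. Then for any $(x,y)\in\mathbb{R}^n\times\mathbb{R}^p$, $0\in\mathcal{D}_h(x,y)$ if and only if $0\in\hat{\mathcal{D}}_s(x,y)$.
   Context: Standing assumptions. (A1) Constants $M_f,\mu,L_g,Q_g>0$ exist such that: $f:\mathbb{R}^n\times\mathbb{R}^p\to\mathbb{R}$ is $M_f$-Lipschitz; $g$ is twice differentiable with $\nabla^2_{yy}g\succeq\mu I_p$; $\nabla g$ is $L_g$-Lipschitz; $\nabla^2_{yy}g,\nabla^2_{xy}g$ are $Q_g$-Lipschitz; $\nabla^2_{yy}g$ is continuously differentiable ($\nabla^2_{xy}g\in\mathbb{R}^{n\times p}$ has entries $\partial^2g/\partial x_i\partial y_j$). (A2) $f$ is a potential function of a conservative field $\mathcal{D}_f$ with compact convex values of norm at most $M_f$. Notation (all at $(x,y)$): $H=\nabla^2_{yy}g$; $\mathcal{A}(x,y):=y-H^{-1}\nabla_yg$; $\nabla^3_{xyy}g(x,y)[d]:=\lim_{t\to0}\frac1t(\nabla^2_{xy}g(x,y+td)-\nabla^2_{xy}g(x,y))$, $\nabla^3_{yyy}g(x,y)[d]:=\lim_{t\to0}\frac1t(\nabla^2_{yy}g(x,y+td)-\nabla^2_{yy}g(x,y))$; $J_{A,x}:=-\nabla^2_{xy}gH^{-1}+\nabla^3_{xyy}g[H^{-1}\nabla_yg]H^{-1}$, $J_{A,y}:=\nabla^3_{yyy}g[H^{-1}\nabla_yg]H^{-1}$;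 $\mathcal{D}_h(x,y):=\{(d_x+J_{A,x}d_y+\beta\nabla^2_{xy}g\nabla_yg,\ J_{A,y}d_y+\beta H\nabla_yg):(d_x,d_y)\in\mathcal{D}_f(x,\mathcal{A}(x,y))\}$; $\hat{\mathcal{D}}_s(x,y):=\{(d_x-\nabla^2_{xy}gH^{-1}d_y,\ \hat\beta\nabla_yg):(d_x,d_y)\in\mathcal{D}_f(x,\mathcal{A}(x,y))\}$. *)

(* Defs.v *)
From HB Require Import structures.
From mathcomp Require Import all_boot all_order all_algebra.
From mathcomp Require Import all_classical all_reals all_analysis.
Set Implicit Arguments. Unset Strict Implicit. Unset Printing Implicit Defensive.
Import Order.TTheory GRing.Theory Num.Theory.
Import numFieldNormedType.Exports.
Local Open Scope classical_set_scope.
Local Open Scope ring_scope.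

Section Defs.
Context {R : realType} {n p : nat}.

Notation Z := ('cV[R]_n * 'cV[R]_p)%type.

Definition sqnorm {m : nat} (v : 'cV[R]_m) : R := \sum_(i < m) v i 0 ^+ 2.
Definition enorm {m : nat} (v : 'cV[R]_m) : R := Num.sqrt (sqnorm v).
Definition pnorm (z : Z) : R := Num.sqrt (sqnorm z.1 + sqnorm z.2).
Definition pdot (z w : Z) : R :=
  \sum_(i < n) z.1 i 0 * w.1 i 0 + \sum_(j < p) z.2 j 0 * w.2 j 0.

Definition ex (i : 'I_n) : Z := (delta_mx i 0, 0).
Definition ey (j : 'I_p) : Z := (0, delta_mx j 0).

Definition gradx (g : Z -> R) (z : Z) : 'cV[R]_n := \col_i derive g z (ex i).
Definition grady (g : Z -> R) (z : Z) : 'cV[R]_p := \col_j derive g z (ey j).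
Definition grad (g : Z -> R) (z : Z) : Z := (gradx g z, grady g z).

Definition Hyy (g : Z -> R) (z : Z) : 'M[R]_p :=
  \matrix_(i, j) derive (fun w => derive g w (ey j)) z (ey i).
Definition Hxy (g : Z -> R) (z : Z) : 'M[R]_(n, p) :=
  \matrix_(i, j) derive (fun w => derive g w (ey j)) z (ex i).

Definition Txyy (g : Z -> R) (z : Z) (d : 'cV[R]_p) : 'M[R]_(n, p) :=
  derive (Hxy g) z (0, d).
Definition Tyyy (g : Z -> R) (z : Z) (d : 'cV[R]_p) : 'M[R]_p :=
  derive (Hyy g) z (0, d).

Definition Amap (g : Z -> R) (x : 'cV[R]_n) (y : 'cV[R]_p) : 'cV[R]_p :=
  y - invmx (Hyy g (x, y)) *m grady g (x, y).

Definition JAx (g : Z -> R) (x : 'cV[R]_n) (y : 'cV[R]_p) : 'M[R]_(n, p) :=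
  let z := (x, y) in
  let Hi := invmx (Hyy g z) in
  - (Hxy g z *m Hi) + Txyy g z (Hi *m grady g z) *m Hi.
Definition JAy (g : Z -> R) (x : 'cV[R]_n) (y : 'cV[R]_p) : 'M[R]_p :=
  let z := (x, y) in
  let Hi := invmx (Hyy g z) in
  Tyyy g z (Hi *m grady g z) *m Hi.

Definition Dh (Df : Z -> set Z) (g : Z -> R) (beta : R)
    (x : 'cV[R]_n) (y : 'cV[R]_p) : set Z :=
  [set (d.1 + JAx g x y *m d.2 + beta *: (Hxy g (x, y) *m grady g (x, y)),
        JAy g x y *m d.2 + beta *: (Hyy g (x, y) *m grady g (x, y)))
   | d in Df (x, Amap g x y)].
Definition Dhats (Df : Z -> set Z) (g : Z -> R) (betahat : R)
    (x : 'cV[R]_n) (y : 'cV[R]_p) : set Z :=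
  [set (d.1 - Hxy g (x, y) *m invmx (Hyy g (x, y)) *m d.2,
        betahat *: grady g (x, y))
   | d in Df (x, Amap g x y)].

Definition lipschitz_with (L : R) (f : Z -> R) :=
  forall z w : Z, `|f z - f w| <= L * pnorm (z - w).

Definition twice_differentiable (g : Z -> R) :=
  forall z : Z, differentiable g z /\ differentiable (grad g) z.

Definition loewner_ge (M : 'M[R]_p) (mu : R) :=
  forall v : 'cV[R]_p, mu * sqnorm v <= (v^T *m M *m v) 0 0.

Definition grad_lipschitz (L : R) (g : Z -> R) :=
  forall z w : Z, pnorm (grad g z - grad g w) <= L * pnorm (z - w).

(* Q-Lipschitz w.r.t. the operator (spectral) norm, unfolded *)
Definition op_lipschitz {m : nat} (Q : R) (M : Z -> 'M[R]_(m, p)) :=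
  forall (z w : Z) (v : 'cV[R]_p),
    enorm ((M z - M w) *m v) <= Q * pnorm (z - w) * enorm v.

Definition C1 (phi : Z -> R) :=
  (forall z : Z, differentiable phi z) /\
  (forall v : Z, continuous (fun z => derive phi z v)).
Definition C1_mx {m k : nat} (M : Z -> 'M[R]_(m, k)) :=
  forall i j, C1 (fun z => M z i j).

Definition abs_cont01 (gam : R -> Z) :=
  forall eps : R, 0 < eps -> exists2 delta : R, 0 < delta &
    forall (k : nat) (a b : nat -> R),
      0 <= a 0%N -> (k > 0)%N -> b k.-1 <= 1 ->
      (forall i, (i < k)%N -> a i <= b i) ->
      (forall i, (i.+1 < k)%N -> b i <= a i.+1) ->
      \sum_(i < k) (b i - a i) < delta ->
      \sum_(i < k) pnorm (gam (b i) - gam (a i)) < eps.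

Definition path_integrand (D : Z -> set Z) (gam : R -> Z) (t : R) : R :=
  sup [set pdot (derive1 gam t) v | v in D (gam t)].

Definition path_integral (D : Z -> set Z) (gam : R -> Z) : \bar R :=
  (\int[@lebesgue_measure R]_(t in `[0%R, 1%R]) (path_integrand D gam t)%:E)%E.

Definition conservative_field (D : Z -> set Z) :=
  closed [set zv : Z * Z | D zv.1 zv.2] /\
  (forall z, D z !=set0 /\ compact (D z)) /\
  (forall gam, abs_cont01 gam -> gam 0 = gam 1 -> path_integral D gam = 0%E).

Definition potential_of (f : Z -> R) (D : Z -> set Z) :=
  forall gam, abs_cont01 gam -> path_integral D gam = (f (gam 1) - f (gam 0))%:E.

Definition convex_values (D : Z -> set Z) :=
  forall z u v (t : R), D z u -> D z v -> 0 <= t <= 1 ->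
    D z (t *: u + (1 - t) *: v).

Definition bounded_values (M : R) (D : Z -> set Z) :=
  forall z v, D z v -> pnorm v <= M.

End Defs.

(* Main.v *)
Require Import Defs.
From HB Require Import structures.
From mathcomp Require Import all_boot all_order all_algebra.
From mathcomp Require Import all_classical all_reals all_analysis.
From mathcomp Require Import ring lra.
Import Order.TTheory GRing.Theory Num.Theory.
Import numFieldNormedType.Exports.
Local Open Scope classical_set_scope.
Local Open Scope ring_scope.

Section V.
Context {R : realType}.

Definition dotv {m : nat} (a b : 'cV[R]_m) : R := \sum_i a i 0 * b i 0.

Lemma sqnorm_ge0 {m : nat} (a : 'cV[R]_m) : 0 <= sqnorm a.
Proof. by apply: sumr_ge0 => i _; exact: sqr_ge0. Qed.

Lemma sqnorm_eq0 {m : nat} (a : 'cV[R]_m) : sqnorm a = 0 -> a = 0.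
Proof.
move=> /eqP; rewrite psumr_eq0 => [/allP H|i _]; last exact: sqr_ge0.
apply/matrixP => i j; rewrite (ord1 j) mxE.
by have := H i (mem_index_enum i); rewrite implyTb sqrf_eq0 => /eqP.
Qed.

Lemma expand {m : nat} (a b : 'cV[R]_m) s :
  \sum_i (s * a i 0 - b i 0)^+2 = s^+2 * sqnorm a - 2 * s * dotv a b + sqnorm b.
Proof.
rewrite /sqnorm /dotv !mulr_sumr -sumrB -big_split /=; apply: eq_bigr => i _; ring.
Qed.

Lemma amgm {m : nat} (a b : 'cV[R]_m) s : 2 * s * dotv a b <= s^+2 * sqnorm a + sqnorm b.
Proof.
have : 0 <= \sum_i (s * a i 0 - b i 0)^+2 by apply: sumr_ge0 => i _; exact: sqr_ge0.
rewrite expand; lra.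
Qed.

Lemma dotv0l {m : nat} (b : 'cV[R]_m) : dotv 0 b = 0.
Proof. by rewrite /dotv big1 // => i _; rewrite mxE mul0r. Qed.

Lemma CS {m : nat} (a b : 'cV[R]_m) : dotv a b ^+ 2 <= sqnorm a * sqnorm b.
Proof.
have [A0|A0] := eqVneq (sqnorm a) 0.
  by rewrite A0 (sqnorm_eq0 _ A0) dotv0l expr0n /= mul0r.
have Apos : 0 < sqnorm a by rewrite lt_def A0 sqnorm_ge0.
have := amgm a b (dotv a b / sqnorm a).
have sA : dotv a b / sqnorm a * sqnorm a = dotv a b by rewrite mulfVK.
move: (dotv a b / sqnorm a) sA => s sA h.
have hB := sqnorm_ge0 b.
nra.
Qed.

Lemma dot_abs_le {m : nat} (a b : 'cV[R]_m) : `|dotv a b| <= enorm a * enorm b.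
Proof.
rewrite /enorm -sqrtrM ?sqnorm_ge0 // -sqrtr_sqr ler_sqrt ?mulr_ge0 ?sqnorm_ge0 //.
exact: CS.
Qed.

Lemma dot_le {m : nat} (a b : 'cV[R]_m) : dotv a b <= enorm a * enorm b.
Proof. exact: le_trans (ler_norm _) (dot_abs_le a b). Qed.

Lemma enorm_ge0 {m : nat} (a : 'cV[R]_m) : 0 <= enorm a.
Proof. exact: sqrtr_ge0. Qed.

Lemma enorm_sq {m : nat} (a : 'cV[R]_m) : enorm a ^+ 2 = sqnorm a.
Proof. by rewrite /enorm sqr_sqrtr // sqnorm_ge0. Qed.

Lemma sqnormZ {m : nat} (a : 'cV[R]_m) c : sqnorm (c *: a) = c ^+ 2 * sqnorm a.
Proof. by rewrite /sqnorm mulr_sumr; apply: eq_bigr => i _; rewrite mxE exprMn. Qed.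

Lemma enormZ {m : nat} (a : 'cV[R]_m) c : enorm (c *: a) = `|c| * enorm a.
Proof. by rewrite /enorm sqnormZ sqrtrM ?sqr_ge0 // sqrtr_sqr. Qed.

Lemma enormN {m : nat} (a : 'cV[R]_m) : enorm (- a) = enorm a.
Proof. by rewrite -scaleN1r enormZ normrN normr1 mul1r. Qed.

Lemma dotvNl {m : nat} (a b : 'cV[R]_m) : dotv (- a) b = - dotv a b.
Proof. by rewrite /dotv -sumrN; apply: eq_bigr => i _; rewrite mxE mulNr. Qed.

Lemma dotvDr {m : nat} (a b c : 'cV[R]_m) : dotv a (b + c) = dotv a b + dotv a c.
Proof. by rewrite /dotv -big_split; apply: eq_bigr => i _; rewrite mxE mulrDr. Qed.

Lemma dotvZr {m : nat} (a b : 'cV[R]_m) k : dotv a (k *: b) = k * dotv a b.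
Proof. by rewrite /dotv mulr_sumr; apply: eq_bigr => i _; rewrite mxE mulrCA. Qed.

Lemma dotv0r {m : nat} (a : 'cV[R]_m) : dotv a 0 = 0.
Proof. by rewrite /dotv big1 // => i _; rewrite mxE mulr0. Qed.

Lemma quad_dot {m : nat} (H : 'M[R]_m) v : (v^T *m H *m v) 0 0 = dotv v (H *m v).
Proof. by rewrite -mulmxA mxE /dotv; apply: eq_bigr => i _; rewrite mxE. Qed.

Lemma coercive {m : nat} (H : 'M[R]_m) mu v : 0 < mu ->
  (forall v, mu * sqnorm v <= (v^T *m H *m v) 0 0) ->
  mu * enorm v <= enorm (H *m v).
Proof.
move=> mu0 L; have h1 := L v; rewrite quad_dot -enorm_sq in h1.
have h2 := dot_le v (H *m v).
have e0 := enorm_ge0 v; have f0 := enorm_ge0 (H *m v).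
have [E0|E0] := eqVneq (enorm v) 0; first by rewrite E0 mulr0.
have Ep : 0 < enorm v by rewrite lt_def E0 e0.
have : enorm v * (mu * enorm v) <= enorm v * enorm (H *m v) by nra.
by rewrite ler_pM2l.
Qed.

Lemma inj_unit {m : nat} (H : 'M[R]_m) : (forall v : 'cV[R]_m, H *m v = 0 -> v = 0) -> H \in unitmx.
Proof.
move=> hinj.
rewrite -unitmx_tr -row_free_unit -kermx_eq0; apply/eqP/row_matrixP => i; rewrite row0.
have : row i (kermx H^T) *m H^T = 0 by rewrite -row_mul mulmx_ker row0.
move=> /(congr1 trmx); rewrite trmx_mul trmxK trmx0 => /hinj /(congr1 trmx).
by rewrite trmxK trmx0.
Qed.

Lemma loewner_unit {m : nat} (H : 'M[R]_m) mu : 0 < mu ->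
  (forall v, mu * sqnorm v <= (v^T *m H *m v) 0 0) -> H \in unitmx.
Proof.
move=> mu0 L; apply: inj_unit => v Hv.
have := L v; rewrite quad_dot Hv dotv0r => h.
apply: sqnorm_eq0; apply/eqP; rewrite eq_le sqnorm_ge0 andbT.
by rewrite -(pmulr_rle0 _ mu0).
Qed.

Lemma derive0dir {V W : normedModType R} (f : V -> W) a : derive f a 0 = 0.
Proof.
rewrite /derive.
have -> : (fun h : R => h^-1 *: ((f \o shift a) (h *: 0) - f a)) = fun=> 0.
  by apply/funext => h /=; rewrite scaler0 add0r subrr scaler0.
exact: lim_cst.
Qed.

Lemma phi_cont (m k : nat) (a : 'cV[R]_m) (w : 'cV[R]_k) :
  continuous (fun M : 'M[R]_(m, k) => \sum_i \sum_j (a i 0 * w j 0) * M i j).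
Proof.
apply: continuous_big; first exact: add_continuous.
move=> i _; apply: continuous_big; first exact: add_continuous.
move=> j _ M.
apply: (@continuous_comp _ _ _ (fun M : 'M[R]_(m,k) => M i j) ( *%R (a i 0 * w j 0))); [exact: coord_continuous | exact: mulrl_continuous].
Qed.

Lemma phiE (m k : nat) (a : 'cV[R]_m) (w : 'cV[R]_k) (M : 'M[R]_(m, k)) :
  dotv a (M *m w) = \sum_i \sum_j (a i 0 * w j 0) * M i j.
Proof.
rewrite /dotv; apply: eq_bigr => i0 _; rewrite !mxE mulr_sumr.
apply: eq_bigr => j0 _; rewrite mulrCA mulrC; done.
Qed.
Lemma lim_bound {V : normedModType R} (m k : nat) (M : V -> 'M[R]_(m, k)) z v
   (a : 'cV[R]_m) (w : 'cV[R]_k) (K : R) :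
  derivable M z v ->
  (forall h : R, h != 0 -> dotv a ((h^-1 *: (M (h *: v + z) - M z)) *m w) <= K) ->
  dotv a (derive M z v *m w) <= K.
Proof.
move=> dM hb.
have cq : (fun h : R => h^-1 *: ((M \o shift z) (h *: v) - M z)) @ 0^' --> derive M z v := dM.
have := @continuous_cvg _ _ _ _ _ _ _ (derive M z v) (phi_cont _ _ a w (derive M z v)) cq.
move=> cphi.
rewrite phiE.
apply: (ler_cvg_to (cphi _) (cvg_cst K)).
near=> h.
rewrite /= -phiE; apply: hb.
near: h; exact: nbhs_dnbhs_neq.
Unshelve. all: by end_near.
Qed.

Lemma pnormZ {n p : nat} (z : 'cV[R]_n * 'cV[R]_p) c : pnorm (c *: z) = `|c| * pnorm z.
Proof.
rewrite /pnorm.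
change (Num.sqrt (sqnorm (c *: z.1) + sqnorm (c *: z.2)) = `|c| * Num.sqrt (sqnorm z.1 + sqnorm z.2)).
by rewrite !sqnormZ -mulrDr sqrtrM ?sqr_ge0 // sqrtr_sqr.
Qed.

Lemma pnorm0u {n p : nat} (u : 'cV[R]_p) : pnorm ((0 : 'cV[R]_n), u) = enorm u.
Proof.
rewrite /pnorm /enorm /=.
have -> : sqnorm (0 : 'cV[R]_n) = 0 by rewrite /sqnorm big1 // => i _; rewrite mxE expr0n.
by rewrite add0r.
Qed.

Lemma enorm2_le {n p : nat} (d : 'cV[R]_n * 'cV[R]_p) : enorm d.2 <= pnorm d.
Proof.
rewrite /enorm /pnorm ler_sqrt ?addr_ge0 ?sqnorm_ge0 //.
by rewrite lerDr sqnorm_ge0.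
Qed.

End V.

Theorem proposition4p5 (R : realType) (n p : nat)
    (f g : 'cV[R]_n * 'cV[R]_p -> R)
    (Df : 'cV[R]_n * 'cV[R]_p -> set ('cV[R]_n * 'cV[R]_p))
    (Mf mu Lg Qg beta betahat : R) :
  (* (A1) *)
  0 < Mf -> 0 < mu -> 0 < Lg -> 0 < Qg ->
  lipschitz_with Mf f ->
  twice_differentiable g ->
  (forall z, loewner_ge (Hyy g z) mu) ->
  grad_lipschitz Lg g ->
  op_lipschitz Qg (Hyy g) ->
  op_lipschitz Qg (Hxy g) ->
  C1_mx (Hyy g) ->
  (* (A2) *)
  conservative_field Df ->
  potential_of f Df ->
  convex_values Df ->
  bounded_values Mf Df ->
  (* parameters *)
  0 < betahat ->
  2 * Qg * Mf / mu ^+ 3 <= beta ->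
  forall (x : 'cV[R]_n) (y : 'cV[R]_p),
    Dh Df g beta x y 0 <-> Dhats Df g betahat x y 0.
Proof.
move=> Mf0 mu0 Lg0 Qg0 _ _ HL _ HyyL _ HC1 _ _ _ Dbd bh0 hbeta x y.
have hU : Hyy g (x, y) \in unitmx by exact: (loewner_unit _ _ mu0 (HL (x, y))).
rewrite /Dh /Dhats /JAx /JAy /=.
set H := Hyy g (x, y); set Hi := invmx H; set G := grady g (x, y); set Hx := Hxy g (x, y).
have simp : G = 0 -> Txyy g (x, y) (Hi *m G) = 0 /\ Tyyy g (x, y) (Hi *m G) = 0.
  move=> ->; rewrite mulmx0 /Txyy /Tyyy; split; exact: (derive0dir _ (x, y)).
split.
- case=> d Dd [e1 e2].
  have G0 : G = 0.
    set u := Hi *m G; set w := Hi *m d.2.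
    have hu : H *m u = G by rewrite /u mulmxA mulmxV // mul1mx.
    have hw : H *m w = d.2 by rewrite /w mulmxA mulmxV // mul1mx.
    have Lx : forall v, mu * sqnorm v <= (v^T *m H *m v) 0 0 := HL (x, y).
    have cu := coercive H mu u mu0 Lx; rewrite hu in cu.
    have cw := coercive H mu w mu0 Lx; rewrite hw in cw.
    have dM : enorm d.2 <= Mf := le_trans (enorm2_le d) (Dbd _ _ Dd).
    have lo : mu * sqnorm G <= dotv G (H *m G) by rewrite -quad_dot; exact: Lx.
    have e2' : Tyyy g (x, y) u *m w + beta *: (H *m G) = 0 by rewrite /w mulmxA.
    have eq : dotv (- G) (Tyyy g (x, y) u *m w) = beta * dotv G (H *m G).
      have := congr1 (dotv G) e2'; rewrite dotvDr dotvZr dotv0r dotvNl => h; lra.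
    have tb : dotv (- G) (Tyyy g (x, y) u *m w) <= enorm (- G) * (Qg * enorm u * enorm w).
      rewrite /Tyyy; apply: lim_bound.
      + apply/derivable_mxP => i j; apply: diff_derivable; exact: (HC1 i j).1.
      + move=> h h0; apply: le_trans (dot_le _ _) _; apply: ler_wpM2l; first exact: enorm_ge0.
        rewrite -scalemxAl enormZ.
        have := HyyL (h *: ((0 : 'cV[R]_n), u) + (x, y)) (x, y) w.
        rewrite addrK pnormZ pnorm0u => hb.
        apply: le_trans (ler_wpM2l (normr_ge0 _) hb) _.
        have hn : `|h| != 0 by rewrite normr_eq0.
        rewrite normfV.
        have -> : `|h|^-1 * (Qg * (`|h| * enorm u) * enorm w) = Qg * enorm u * enorm w by field.
        done.
    rewrite enormN eq in tb.
    rewrite -enorm_sq in lo.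
    have beta0 : 0 <= beta.
      apply: le_trans hbeta; apply/ltW; apply: divr_gt0; last exact: exprn_gt0.
      by apply: mulr_gt0 => //; apply: mulr_gt0.
    have hb2 : 2 * Qg * Mf <= beta * mu ^+ 3 by rewrite -ler_pdivrMr // exprn_gt0.
    have e0 := enorm_ge0 G; have U0 := enorm_ge0 u; have W0 := enorm_ge0 w.
    have s1 : beta * (mu * enorm G ^+ 2) <= enorm G * (Qg * enorm u * enorm w).
      exact: le_trans (ler_wpM2l beta0 lo) tb.
    have s2 : (mu * enorm u) * (mu * enorm w) <= enorm G * Mf.
      apply: ler_pM => //; [exact: mulr_ge0 (ltW mu0) U0 | exact: mulr_ge0 (ltW mu0) W0 | exact: le_trans cw dM].
    have s3 : 2 * Qg * Mf * enorm G ^+ 2 <= Qg * Mf * enorm G ^+ 2.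
      have t1 : 2 * Qg * Mf * enorm G ^+ 2 <= beta * mu ^+ 3 * enorm G ^+ 2.
        by apply: ler_wpM2r => //; exact: exprn_ge0.
      have t2 : beta * mu ^+ 3 * enorm G ^+ 2 <= mu ^+ 2 * (enorm G * (Qg * enorm u * enorm w)).
        have -> : beta * mu ^+ 3 * enorm G ^+ 2 = mu ^+ 2 * (beta * (mu * enorm G ^+ 2)) by ring.
        by apply: ler_wpM2l => //; exact: exprn_ge0 (ltW mu0).
      have t3 : mu ^+ 2 * (enorm G * (Qg * enorm u * enorm w)) <= Qg * Mf * enorm G ^+ 2.
        have -> : mu ^+ 2 * (enorm G * (Qg * enorm u * enorm w)) = (Qg * enorm G) * ((mu * enorm u) * (mu * enorm w)) by ring.
        have -> : Qg * Mf * enorm G ^+ 2 = (Qg * enorm G) * (enorm G * Mf) by ring.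
        by apply: ler_wpM2l => //; exact: mulr_ge0 (ltW Qg0) e0.
      exact: le_trans t1 (le_trans t2 t3).
    have s4 : enorm G ^+ 2 <= 0.
      have QM : 0 < Qg * Mf by exact: mulr_gt0.
      nra.
    apply: sqnorm_eq0; rewrite -enorm_sq; apply/eqP; rewrite eq_le s4 /=; exact: exprn_ge0.
  have [t1 t2] := simp G0.
  exists d => //.
  move: e1; rewrite t1 mul0mx addr0 G0 mulmx0 scaler0 addr0 mulNmx => e1.
  by rewrite e1 scaler0.
- case=> d Dd [e1 e2].
  have G0 : G = 0.
    by move: e2 => /eqP; rewrite scaler_eq0 (gt_eqF bh0) /= => /eqP.
  have [t1 t2] := simp G0.
  exists d => //.
  by rewrite t1 t2 G0 !mul0mx !mulmx0 !scaler0 !addr0 mulNmx e1.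
Qed.
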